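(* Let $M\ge 1$ and let $I:\mathbb{R}_+^M\to\mathbb{R}_{++}$ be a concave function. Then $I$ is a standard interference function, i.e. (1) for all $\mathbf{x}\in\mathbb{R}_+^M$ and all $\alpha>1$, $\alpha I(\mathbf{x})>I(\alpha\mathbf{x})$; and (2) for all $\mathbf{x}_1,\mathbf{x}_2\in\mathbb{R}_+^M$ with $\mathbf{x}_1\ge\mathbf{x}_2$ (componentwise), $I(\mathbf{x}_1)\ge I(\mathbf{x}_2)$.
   Context: $\mathbb{R}_+$ denotes the nonnegative reals and $\mathbb{R}_{++}$ the strictly positive reals; vector inequalities are componentwise. A function $I:\mathbb{R}_+^M\to\mathbb{R}_{++}$ is called a standard interference function if it satisfies scalability ($\alpha I(\mathbf{x})>I(\alpha\mathbf{x})$ for all $\mathbf{x}\in\mathbb{R}_+^M$, $\alpha>1$) and monotonicity ($I(\mathbf{x}_1)\ge I(\mathbf{x}_2)$ whenever $\mathbf{x}_1\ge\mathbf{x}_2$). *)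

(* Defs.v *)
(* Vectors of R^M are rows 'rV[R]_M over an arbitrary
   real field R (the paper's R is the instance of real numbers). *)
From HB Require Import structures.
From mathcomp Require Import all_boot all_order all_algebra.
Set Implicit Arguments. Unset Strict Implicit. Unset Printing Implicit Defensive.
Import Order.TTheory GRing.Theory Num.Theory.
Local Open Scope ring_scope.

Definition nonneg_vec (R : realFieldType) (M : nat) (x : 'rV[R]_M) : Prop :=
  forall i : 'I_M, 0 <= x ord0 i.

Definition vec_ge (R : realFieldType) (M : nat) (x1 x2 : 'rV[R]_M) : Prop :=
  forall i : 'I_M, x2 ord0 i <= x1 ord0 i.

Definition concave_on_orthant (R : realFieldType) (M : nat)
    (I : 'rV[R]_M -> R) : Prop :=
  forall (x y : 'rV[R]_M) (t : R), nonneg_vec x -> nonneg_vec y ->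
    0 <= t -> t <= 1 ->
    t * I x + (1 - t) * I y <= I (t *: x + (1 - t) *: y).

Definition positive_on_orthant (R : realFieldType) (M : nat)
    (I : 'rV[R]_M -> R) : Prop :=
  forall x : 'rV[R]_M, nonneg_vec x -> 0 < I x.

Definition standard_interference (R : realFieldType) (M : nat)
    (I : 'rV[R]_M -> R) : Prop :=
  (forall (x : 'rV[R]_M) (a : R), nonneg_vec x -> 1 < a -> I (a *: x) < a * I x)
  /\ (forall x1 x2 : 'rV[R]_M, nonneg_vec x1 -> nonneg_vec x2 ->
        vec_ge x1 x2 -> I x2 <= I x1).

(* Main.v *)
Require Import Defs.
From HB Require Import structures.
From mathcomp Require Import all_boot all_order all_algebra.
From mathcomp Require Import ring lra.
Import Order.TTheory GRing.Theory Num.Theory.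
Local Open Scope ring_scope.

Theorem proposition1 (R : realFieldType) (M : nat) (HM : (1 <= M)%N)
    (I : 'rV[R]_M -> R)
    (Hpos : positive_on_orthant I) (Hconc : concave_on_orthant I) :
  standard_interference I.
Proof.
have nn0 : nonneg_vec (0 : 'rV[R]_M) by move=> i; rewrite mxE.
split.
- move=> x a hx ha.
  have a0 : a != 0 by apply/eqP => e; rewrite e in ha; lra.
  have hax : nonneg_vec (a *: x).
    by move=> i; rewrite mxE; apply: mulr_ge0; [lra| exact: hx].
  have ai0 : 0 <= a^-1 by rewrite invr_ge0; lra.
  have ai1 : a^-1 <= 1 by rewrite invf_le1; lra.
  have := Hconc _ _ a^-1 hax nn0 ai0 ai1.
  have -> : a^-1 *: (a *: x) + (1 - a^-1) *: 0 = x.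
    by rewrite scaler0 addr0 scalerA mulVf // scale1r.
  have h0 := Hpos _ nn0.
  have h1 : a * a^-1 = 1 by rewrite mulfV.
  have ai1' : a^-1 < 1 by rewrite invf_lt1; lra.
  move=> H.
  have H2 : a^-1 * I (a *: x) < I x by nra.
  have : a * (a^-1 * I (a *: x)) < a * I x by rewrite ltr_pM2l //; lra.
  by rewrite mulrA h1 mul1r.
- move=> x1 x2 h1 h2 hge.
  rewrite leNgt; apply/negP => hlt.
  have z0 := Hpos _ h2.
  have y0 := Hpos _ h1.
  set y := I x1 in hlt y0 *; set z := I x2 in hlt z0 *.
  set t := (z - y) / (2 * z).
  have t0 : 0 < t by rewrite /t divr_gt0 //; lra.
  have tn0 : t != 0 by rewrite gt_eqF.
  have t1 : t <= 1.
    rewrite /t ler_pdivrMr; lra.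
  have hw : nonneg_vec (x2 + t^-1 *: (x1 - x2)).
    move=> i; rewrite !mxE; apply: addr_ge0; first exact: h2.
    apply: mulr_ge0; first by rewrite invr_ge0 ltW.
    by rewrite subr_ge0; apply: hge.
  have := Hconc _ _ t hw h2 (ltW t0) t1.
  have -> : t *: (x2 + t^-1 *: (x1 - x2)) + (1 - t) *: x2 = x1.
    apply/rowP => j; rewrite !mxE; field; exact: tn0.
  have := Hpos _ hw.
  rewrite -/y -/z.
  set w := I _ => hw0 H.
  have ht : t * (2 * z) = z - y by rewrite /t mulfVK // mulf_neq0 // gt_eqF.
  nra.
Qed.
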